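(* Let $\mathcal{R}$ be a left-connected rewriting system over a signature $\Sigma$, let $L_i, L_j$ be left-hand sides of rules of $\mathcal{R}$, let $S_{ij\gamma}$ (with $\epsilon_{ij\gamma}\colon L_i+L_j\to S_{ij\gamma}$) be a hyperedge gluing and $S_{ij\gamma'}$ (with $\epsilon_{ij\gamma'}\colon S_{ij\gamma}\to S_{ij\gamma'}$) a subsequent node gluing, as described below. If $S_{ij\gamma'}$ yields a critical pair, then $S_{ij\gamma}$ yields a critical pair as well.
   Context: A signature $\Sigma$ is a set of triples $(x,n,m)$ (label, arity, coarity). A $\Sigma$-hypergraph $G=(V,E,s,t,l)$ has finite sets $V$ (nodes), $E$ (hyperedges), maps $s,t\colon E\to V^*$ (lists of sources/targets) and a labelling $l\colon E\to\Sigma$ sending a hyperedge with $n$ sources and $m$ targets to some $(x,n,m)$. Morphisms preserve sources, targets and labels; they form the category $\mathbf{Hyp}_\Sigma$, where colimits are computed componentwise and monos/epis are injective/surjective on nodes and hyperedges. Composition is written $f;g$; $\iota_1,\iota_2$ are coprojections. A hypergraph is discrete if it has no hyperedges. A path is a list of hyperedges $[e_1,\dots,e_n]$ with some target of $e_k$ equal to a source of $e_{k+1}$ for each $k$; it goes from $v$ to $v'$ if $v$ is a source of $e_1$ and $v'$ a target of $e_n$; a cycle is a path with some source of $e_1$ a target of $e_n$. In-degree (out-degree) of a node $v$: number of pairs $(e,i)$ with $v$ the $i$-th target (source) of $e$; $in(H)$, $out(H)$: nodes of in-degree $0$, out-degree $0$. $H$ is ma (monogamous acyclic) if it has no cycle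 and all in- and out-degrees are $\le 1$. A cospan $I\to H\leftarrow O$ with $I,O$ discrete is an ma-cospan if $H$ is ma and the legs are mono with images $in(H)$ and $out(H)$. $H$ is strongly connected if for all $x\in in(H)$, $y\in out(H)$ there is a path from $x$ to $y$. A left-connected rule is a span $L\xleftarrow{[i_L,o_L]}K=I+O\xrightarrow{[i_R,o_R]}R$ with $I,O$ discrete, $I\to L\leftarrow O$, $I\to R\leftarrow O$ ma-cospans, $[i_L,o_L]$ mono, $L$ strongly connected; a left-connected rewriting system is a finite set of such rules. Derivations (convex DPO rewriting with interface) between ma-cospans are given by a rule, a convex match (a mono whose image contains every hyperedge on every path between two of its nodes) and a double pushout diagram commuting with the interface; for left-connected systems they are determined by a rule and a mono match. A pre-critical pair is a pair of derivations from a common ma-cospan $n\to S\leftarrow m$ with matches $m_1\colon L_i\to S$, $m_2\colon L_j\to S$ such that $[m_1,m_2]$ is epi; it is parallel if $m_1$ factors through the pushout complement $C_2\to S$ of the second derivation and $m_2$ factors through the pushout complement $C_1\to S$ of the first; it is critical if not parallel. Hyperedge gluing: let $M$ be a nonempty set of pairs $(e,e')$, $e$ a hyperedge of $L_i$, $e'$ a hyperedge of $L_j$, with equal labels, no hyperedge occurring in two pairs; let $\gamma$ be the hypergraph with hyperedges $M$ and nodes the pairs $(v,v')$ that are $k$-th sources (or $k$-th targets) of $e,e'$ for some $(e,e')\in M$ and $k$, with projections $p_1^\gamma\colon\gamma\to L_i$, $p_2^\gamma\colon\gamma\to L_j$; $\epsilon_{ij\gamma}\colon L_i+L_j\to S_{ij\gamma}$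 is the coequaliser of $p_1^\gamma;\iota_1$ and $p_2^\gamma;\iota_2$. Node gluing: let $I_1=in(S_{ij\gamma})\cap\epsilon_{ij\gamma}(\iota_1(in(L_i)))$, $I_2=in(S_{ij\gamma})\cap\epsilon_{ij\gamma}(\iota_2(in(L_j)))$, $O_1=out(S_{ij\gamma})\cap\epsilon_{ij\gamma}(\iota_1(out(L_i)))$, $O_2=out(S_{ij\gamma})\cap\epsilon_{ij\gamma}(\iota_2(out(L_j)))$; let $N$ be a set of pairs in $I_1\times O_2$, or a set of pairs in $I_2\times O_1$, with no element occurring in two pairs; $\gamma'$ is the discrete hypergraph with nodes $N$ and projections $p_1^{\gamma'},p_2^{\gamma'}\colon\gamma'\to S_{ij\gamma}$, and $\epsilon_{ij\gamma'}\colon S_{ij\gamma}\to S_{ij\gamma'}$ is their coequaliser. $S_{ij\gamma}$ yields a critical pair if $\iota_1;\epsilon_{ij\gamma}$, $\iota_2;\epsilon_{ij\gamma}$ are mono, $in(S_{ij\gamma})\xrightarrow{\subseteq}S_{ij\gamma}\xleftarrow{\subseteq}out(S_{ij\gamma})$ is an ma-cospan, and the derivations from it with these matches form a critical pair; likewise for $S_{ij\gamma'}$ with the matches $\iota_k;\epsilon_{ij\gamma};\epsilon_{ij\gamma'}$. *)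

(* Defs.v *)
From Stdlib Require List.
From mathcomp Require Import all_boot.
Set Implicit Arguments. Unset Strict Implicit. Unset Printing Implicit Defensive.

Record signature := Signature {
  slabel : Type;
  smem : slabel -> nat -> nat -> Prop }.

(* Sigma-hypergraphs.  A hyperedge e is labelled by the triple
   (lab e, size (src e), size (tgt e)), which must belong to Sigma. *)
Record hyp (Sg : signature) := Hyp {
  node : finType;
  edge : finType;
  src : edge -> seq node;
  tgt : edge -> seq node;
  lab : edge -> slabel Sg;
  labP : forall e, smem (lab e) (size (src e)) (size (tgt e)) }.
Arguments node {Sg}. Arguments edge {Sg}. Arguments src {Sg G} e : rename.
Arguments tgt {Sg G} e : rename. Arguments lab {Sg G} e : rename.

Section Hyp.
Variable Sg : signature.
Notation hyp := (hyp Sg).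

Record hom (G H : hyp) := Hom {
  hV : node G -> node H;
  hE : edge G -> edge H;
  hsrc : forall e, src (hE e) = map hV (src e);
  htgt : forall e, tgt (hE e) = map hV (tgt e);
  hlab : forall e, lab (hE e) = lab e }.

Section Comp.
Variables (G H K : hyp) (f : hom G H) (g : hom H K).
Lemma comp_src e : src (hE g (hE f e)) = map (fun v => hV g (hV f v)) (src e).
Proof. by rewrite !hsrc -map_comp. Qed.
Lemma comp_tgt e : tgt (hE g (hE f e)) = map (fun v => hV g (hV f v)) (tgt e).
Proof. by rewrite !htgt -map_comp. Qed.
Lemma comp_lab e : lab (hE g (hE f e)) = lab e.
Proof. by rewrite !hlab. Qed.
Definition hcomp : hom G K :=
  @Hom G K (fun v => hV g (hV f v)) (fun e => hE g (hE f e)) comp_src comp_tgt comp_lab.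
End Comp.

Definition heq (G H : hyp) (f g : hom G H) : Prop :=
  (forall v, hV f v = hV g v) /\ (forall e, hE f e = hE g e).

Definition mono (G H : hyp) (f : hom G H) : Prop :=
  injective (hV f) /\ injective (hE f).
Definition epi (G H : hyp) (f : hom G H) : Prop :=
  (forall v, exists x, hV f x = v) /\ (forall e, exists x, hE f x = e).

Definition cp_src (G H : hyp) (e : (edge G + edge H)%type) :
    seq (node G + node H)%type :=
  match e with inl e => map inl (src e) | inr e => map inr (src e) end.
Definition cp_tgt (G H : hyp) (e : (edge G + edge H)%type) :
    seq (node G + node H)%type :=
  match e with inl e => map inl (tgt e) | inr e => map inr (tgt e) end.
Definition cp_lab (G H : hyp) (e : (edge G + edge H)%type) : slabel Sg :=
  match e with inl e => lab e | inr e => lab e end.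
Lemma cp_labP (G H : hyp) e :
  smem (cp_lab e) (size (@cp_src G H e)) (size (@cp_tgt G H e)).
Proof. by case: e => e /=; rewrite !size_map; apply: labP. Qed.
Definition coprod (G H : hyp) : hyp :=
  @Hyp Sg (node G + node H)%type (edge G + edge H)%type
    (@cp_src G H) (@cp_tgt G H) (@cp_lab G H) (@cp_labP G H).

Definition inj1 (G H : hyp) : hom G (coprod G H) :=
  @Hom G (coprod G H) inl inl (fun _ => erefl) (fun _ => erefl) (fun _ => erefl).
Definition inj2 (G H : hyp) : hom H (coprod G H) :=
  @Hom H (coprod G H) inr inr (fun _ => erefl) (fun _ => erefl) (fun _ => erefl).

Section Copair.
Variables (G H K : hyp) (f : hom G K) (g : hom H K).
Definition cpV (v : node (coprod G H)) : node K :=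
  match v with inl a => hV f a | inr b => hV g b end.
Definition cpE (e : edge (coprod G H)) : edge K :=
  match e with inl a => hE f a | inr b => hE g b end.
Lemma cpE_src e : src (cpE e) = map cpV (src e).
Proof. by case: e => e /=; rewrite hsrc -map_comp. Qed.
Lemma cpE_tgt e : tgt (cpE e) = map cpV (tgt e).
Proof. by case: e => e /=; rewrite htgt -map_comp. Qed.
Lemma cpE_lab e : lab (cpE e) = lab e.
Proof. by case: e => e /=; rewrite hlab. Qed.
Definition copair : hom (coprod G H) K := @Hom (coprod G H) K cpV cpE cpE_src cpE_tgt cpE_lab.
End Copair.

Definition is_coeq (A B Q : hyp) (f g : hom A B) (q : hom B Q) : Prop :=
  heq (hcomp f q) (hcomp g q) /\
  forall (X : hyp) (h : hom B X), heq (hcomp f h) (hcomp g h) ->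
    exists u : hom Q X, heq (hcomp q u) h /\
      forall u' : hom Q X, heq (hcomp q u') h -> heq u' u.

Definition is_pushout (A B C D : hyp) (f : hom A B) (g : hom A C)
    (p : hom B D) (q : hom C D) : Prop :=
  heq (hcomp f p) (hcomp g q) /\
  forall (X : hyp) (h : hom B X) (k : hom C X), heq (hcomp f h) (hcomp g k) ->
    exists u : hom D X, heq (hcomp p u) h /\ heq (hcomp q u) k /\
      forall u' : hom D X, heq (hcomp p u') h -> heq (hcomp q u') k -> heq u' u.

Definition discrete (G : hyp) : Prop := #|edge G| = 0.

Definition void_src (T : finType) (e : void) : seq T := match e with end.
Definition void_lab (e : void) : slabel Sg := match e with end.
Lemma void_labP (T : finType) (e : void) :
  smem (void_lab e) (size (void_src T e)) (size (void_src T e)).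
Proof. by case: e. Qed.
Definition disc (T : finType) : hyp :=
  @Hyp Sg T void (@void_src T) (@void_src T) void_lab (@void_labP T).
Definition disc_hom (T : finType) (G : hyp) (f : T -> node G) : hom (disc T) G :=
  @Hom (disc T) G f (fun e => match e with end)
    (fun e => match e with end) (fun e => match e with end)
    (fun e => match e with end).

Definition indeg (G : hyp) (v : node G) : nat :=
  \sum_(e : edge G) count (pred1 v) (tgt e).
Definition outdeg (G : hyp) (v : node G) : nat :=
  \sum_(e : edge G) count (pred1 v) (src e).
Definition inset (G : hyp) : {set node G} := [set v | indeg v == 0].
Definition outset (G : hyp) : {set node G} := [set v | outdeg v == 0].

Definition linked (G : hyp) (e e' : edge G) : bool :=
  has (fun v => v \in src e') (tgt e).
Definition hpath_from_to (G : hyp) (p : seq (edge G)) (v v' : node G) : bool :=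
  match p with
  | [::] => false
  | e :: p' => [&& path (@linked G) e p', v \in src e & v' \in tgt (last e p')]
  end.
Definition acyclic (G : hyp) : Prop := forall p v, ~~ @hpath_from_to G p v v.
Definition is_ma (G : hyp) : Prop :=
  acyclic G /\ forall v : node G, indeg v <= 1 /\ outdeg v <= 1.

Definition ma_cospan (I O H : hyp) (i : hom I H) (o : hom O H) : Prop :=
  [/\ discrete I, discrete O, is_ma H, mono i & mono o] /\
  (forall v, v \in inset H <-> exists x, hV i x = v) /\
  (forall v, v \in outset H <-> exists x, hV o x = v).

Definition strongly_connected (G : hyp) : Prop :=
  forall x y, x \in inset G -> y \in outset G -> exists p, @hpath_from_to G p x y.

(* Rules  L <-[iL,oL]- I+O -[iR,oR]-> R. *)
Record rule := Rule {
  rI : hyp; rO : hyp; rL : hyp; rR : hyp;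
  riL : hom rI rL; roL : hom rO rL; riR : hom rI rR; roR : hom rO rR }.

Definition left_connected_rule (r : rule) : Prop :=
  [/\ discrete (rI r), discrete (rO r), ma_cospan (riL r) (roL r),
      ma_cospan (riR r) (roR r) & mono (copair (riL r) (roL r))] /\
  strongly_connected (rL r).

Definition left_connected_system (rs : seq rule) : Prop :=
  forall r, Stdlib.Lists.List.In r rs -> left_connected_rule r.

Definition convex_match (L G : hyp) (m : hom L G) : Prop :=
  mono m /\
  forall (x y : node L) (p : seq (edge G)),
    hpath_from_to p (hV m x) (hV m y) ->
    forall e, e \in p -> exists e0, hE m e0 = e.

Record derivation (n m S : hyp) (iS : hom n S) (oS : hom m S)
    (r : rule) (mt : hom (rL r) S) := Derivation {
  dC : hyp;
  dk : hom (coprod (rI r) (rO r)) dC;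
  dc : hom dC S;
  dT : hyp;
  dr : hom (rR r) dT;
  dd : hom dC dT;
  dn : hom n dC;
  dm : hom m dC;
  d_convex : convex_match mt;
  d_po1 : is_pushout (copair (riL r) (roL r)) dk mt dc;
  d_po2 : is_pushout (copair (riR r) (roR r)) dk dr dd;
  d_n : heq (hcomp dn dc) iS;
  d_m : heq (hcomp dm dc) oS }.

(* Pre-critical pair that is not parallel. *)
Definition critical_pair (n m S : hyp) (iS : hom n S) (oS : hom m S)
    (r1 : rule) (m1 : hom (rL r1) S) (r2 : rule) (m2 : hom (rL r2) S) : Prop :=
  ma_cospan iS oS /\ epi (copair m1 m2) /\
  exists (D1 : derivation iS oS m1) (D2 : derivation iS oS m2),
    ~ ((exists u : hom (rL r1) (dC D2), heq (hcomp u (dc D2)) m1) /\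
       (exists u : hom (rL r2) (dC D1), heq (hcomp u (dc D1)) m2)).

Definition in_incl (S : hyp) : hom (disc {v : node S | v \in inset S}) S :=
  disc_hom (fun v => val v).
Definition out_incl (S : hyp) : hom (disc {v : node S | v \in outset S}) S :=
  disc_hom (fun v => val v).
Definition yields_cp (r1 r2 : rule) (S : hyp)
    (m1 : hom (rL r1) S) (m2 : hom (rL r2) S) : Prop :=
  [/\ mono m1, mono m2, ma_cospan (in_incl S) (out_incl S)
    & critical_pair (in_incl S) (out_incl S) m1 m2].

Definition valid_edge_gluing (L1 L2 : hyp) (M : {set edge L1 * edge L2}) : Prop :=
  [/\ M != set0,
      (forall x, x \in M -> [/\ lab x.1 = lab x.2,
                                size (src x.1) = size (src x.2) &
                                size (tgt x.1) = size (tgt x.2)]) &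
      (forall x y, x \in M -> y \in M -> x <> y -> x.1 <> y.1 /\ x.2 <> y.2)].

Section Gamma.
Variables (L1 L2 : hyp) (M : {set edge L1 * edge L2}).
Hypothesis HM : valid_edge_gluing M.

Definition gnode (p : node L1 * node L2) : bool :=
  [exists x in M, (p \in zip (src x.1) (src x.2)) || (p \in zip (tgt x.1) (tgt x.2))].
Definition gV := {p : node L1 * node L2 | gnode p}.
Definition gE := {x : edge L1 * edge L2 | x \in M}.
Definition g_src (x : gE) : seq gV :=
  pmap (insub : _ -> option gV) (zip (src (val x).1) (src (val x).2)).
Definition g_tgt (x : gE) : seq gV :=
  pmap (insub : _ -> option gV) (zip (tgt (val x).1) (tgt (val x).2)).
Definition g_lab (x : gE) : slabel Sg := lab (val x).1.

Lemma map_val_pmap_insub (s : seq (node L1 * node L2)) :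
  map val (pmap (insub : _ -> option gV) s) = filter gnode s.
Proof.
elim: s => //= a s IH; case: insubP => [u Pu Eu|Pa] /=.
  by rewrite Pu -Eu IH.
by rewrite (negbTE Pa).
Qed.

Lemma g_src_val x : map val (g_src x) = zip (src (val x).1) (src (val x).2).
Proof.
rewrite map_val_pmap_insub; apply/all_filterP/allP => p Hp.
by apply/existsP; exists (val x); rewrite (valP x) Hp.
Qed.
Lemma g_tgt_val x : map val (g_tgt x) = zip (tgt (val x).1) (tgt (val x).2).
Proof.
rewrite map_val_pmap_insub; apply/all_filterP/allP => p Hp.
by apply/existsP; exists (val x); rewrite (valP x) Hp orbT.
Qed.

Lemma g_labP x : smem (g_lab x) (size (g_src x)) (size (g_tgt x)).
Proof.
have [_ Hl _] := HM; have [_ Hs Ht] := Hl _ (valP x).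
rewrite -(size_map val (g_src x)) -(size_map val (g_tgt x)).
by rewrite g_src_val g_tgt_val !size_zip -Hs -Ht !minnn; apply: labP.
Qed.

Definition gamma : hyp := @Hyp Sg gV gE g_src g_tgt g_lab g_labP.

Lemma gp1_src (x : edge gamma) :
  src (val x).1 = map (fun p : gV => (val p).1) (src x).
Proof.
have [_ Hl _] := HM; have [_ Hs _] := Hl _ (valP x).
by rewrite (map_comp fst val) g_src_val -/(unzip1 _) unzip1_zip // Hs.
Qed.
Lemma gp1_tgt (x : edge gamma) :
  tgt (val x).1 = map (fun p : gV => (val p).1) (tgt x).
Proof.
have [_ Hl _] := HM; have [_ _ Ht] := Hl _ (valP x).
by rewrite (map_comp fst val) g_tgt_val -/(unzip1 _) unzip1_zip // Ht.
Qed.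
Lemma gp1_lab (x : edge gamma) : lab (val x).1 = lab x.
Proof. by []. Qed.
Definition gp1 : hom gamma L1 :=
  @Hom gamma L1 (fun p : gV => (val p).1) (fun x : gE => (val x).1)
    gp1_src gp1_tgt gp1_lab.

Lemma gp2_src (x : edge gamma) :
  src (val x).2 = map (fun p : gV => (val p).2) (src x).
Proof.
have [_ Hl _] := HM; have [_ Hs _] := Hl _ (valP x).
by rewrite (map_comp snd val) g_src_val -/(unzip2 _) unzip2_zip // Hs.
Qed.
Lemma gp2_tgt (x : edge gamma) :
  tgt (val x).2 = map (fun p : gV => (val p).2) (tgt x).
Proof.
have [_ Hl _] := HM; have [_ _ Ht] := Hl _ (valP x).
by rewrite (map_comp snd val) g_tgt_val -/(unzip2 _) unzip2_zip // Ht.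
Qed.
Lemma gp2_lab (x : edge gamma) : lab (val x).2 = lab x.
Proof. have [_ Hl _] := HM; have [Hlab _ _] := Hl _ (valP x). by rewrite -Hlab. Qed.
Definition gp2 : hom gamma L2 :=
  @Hom gamma L2 (fun p : gV => (val p).2) (fun x : gE => (val x).2)
    gp2_src gp2_tgt gp2_lab.
End Gamma.

Section NodeGluing.
Variables (L1 L2 S : hyp) (eps : hom (coprod L1 L2) S).
Definition glI1 : {set node S} :=
  inset S :&: [set hV eps (inl v) | v in inset L1].
Definition glI2 : {set node S} :=
  inset S :&: [set hV eps (inr v) | v in inset L2].
Definition glO1 : {set node S} :=
  outset S :&: [set hV eps (inl v) | v in outset L1].
Definition glO2 : {set node S} :=
  outset S :&: [set hV eps (inr v) | v in outset L2].
Definition valid_node_gluing (N : {set node S * node S}) : Prop :=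
  (N \subset setX glI1 glO2 \/ N \subset setX glI2 glO1) /\
  (forall p q, p \in N -> q \in N -> p <> q ->
     [/\ p.1 <> q.1, p.1 <> q.2, p.2 <> q.1 & p.2 <> q.2]).
End NodeGluing.

Definition gamma' (S : hyp) (N : {set node S * node S}) : hyp :=
  disc {p : node S * node S | p \in N}.
Definition gq1 (S : hyp) (N : {set node S * node S}) : hom (gamma' N) S :=
  disc_hom (fun p : {p : node S * node S | p \in N} => (val p).1).
Definition gq2 (S : hyp) (N : {set node S * node S}) : hom (gamma' N) S :=
  disc_hom (fun p : {p : node S * node S | p \in N} => (val p).2).
End Hyp.

(* Main.v *)
Require Import Defs.
From Stdlib Require List.
From mathcomp Require Import all_boot zify.
Set Implicit Arguments. Unset Strict Implicit. Unset Printing Implicit Defensive.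

Section Gen.
Variable Sg : signature.
Local Notation hyp := (hyp Sg).

Lemma count_le_map (T U : eqType) (f : T -> U) (v : T) s :
  count (pred1 v) s <= count (pred1 (f v)) (map f s).
Proof. rewrite count_map; apply: sub_count => x /= /eqP ->; exact: eqxx. Qed.

Lemma sum_inj_le (I J : finType) (h : I -> J) (F : J -> nat) :
  injective h -> \sum_(i : I) F (h i) <= \sum_(j : J) F j.
Proof.
move=> injh.
rewrite -(big_imset _ (in2W injh)) /=.
rewrite [X in _ <= X](bigID (fun j => j \in [set h x | x in predT])) /=.
exact: leq_addr.
Qed.

Lemma indeg_le (G H : hyp) (f : hom G H) : injective (hE f) ->
  forall v, indeg v <= indeg (hV f v).
Proof.
move=> inj v; rewrite /indeg.
apply: leq_trans (sum_inj_le (fun e => count (pred1 (hV f v)) (tgt e)) inj).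
apply: leq_sum => e _; rewrite htgt; exact: count_le_map.
Qed.

Lemma outdeg_le (G H : hyp) (f : hom G H) : injective (hE f) ->
  forall v, outdeg v <= outdeg (hV f v).
Proof.
move=> inj v; rewrite /outdeg.
apply: leq_trans (sum_inj_le (fun e => count (pred1 (hV f v)) (src e)) inj).
apply: leq_sum => e _; rewrite hsrc; exact: count_le_map.
Qed.

Lemma hpath_map (G H : hyp) (f : hom G H) p v v' :
  hpath_from_to p v v' -> hpath_from_to (map (hE f) p) (hV f v) (hV f v').
Proof.
case: p => //= e p /and3P[Hp Hv Hv'].
apply/and3P; split.
- rewrite path_map; apply: sub_path Hp => e1 e2 /hasP[w Hw1 Hw2] /=.
  apply/hasP; exists (hV f w); rewrite ?hsrc ?htgt; exact: map_f.
- rewrite hsrc; exact: map_f.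
- rewrite last_map htgt; exact: map_f.
Qed.

Lemma mono_comp_l (G H K : hyp) (f : hom G H) (g : hom H K) :
  mono (hcomp f g) -> mono f.
Proof.
case=> [iV iE]; split=> x y E; [apply: iV | apply: iE]; by rewrite /= E.
Qed.

Definition jepi (B C D : hyp) (p : hom B D) (q : hom C D) : Prop :=
  forall (X : hyp) (u1 u2 : hom D X), heq (hcomp p u1) (hcomp p u2) ->
    heq (hcomp q u1) (hcomp q u2) -> heq u1 u2.

Lemma pushout_jepi (A B C D : hyp) (f : hom A B) (g : hom A C) p q :
  @is_pushout Sg A B C D f g p q -> jepi p q.
Proof.
case=> [[cV cE] univ] X u1 u2 h1 h2.
have [|u [_ [_ uniq]]] := univ X (hcomp p u1) (hcomp q u1).
  by split=> x; [move: (cV x) | move: (cE x)] => /= ->.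
have [a1 b1] := uniq u1 (conj (fun _ => erefl) (fun _ => erefl)) (conj (fun _ => erefl) (fun _ => erefl)).
have [a2 b2] := uniq u2 (conj (fun v => esym (h1.1 v)) (fun e => esym (h1.2 e)))
                        (conj (fun v => esym (h2.1 v)) (fun e => esym (h2.2 e))).
by split=> x; [rewrite a1 a2 | rewrite b1 b2].
Qed.

Lemma coeq_jepi (A B Q : hyp) (f g : hom A B) (q : hom B Q) :
  is_coeq f g q -> jepi q q.
Proof.
case=> [[cV cE] univ] X u1 u2 h1 _.
have [|u [_ uniq]] := univ X (hcomp q u1).
  by split=> x; [move: (cV x) | move: (cE x)] => /= ->.
have [a1 b1] := uniq u1 (conj (fun _ => erefl) (fun _ => erefl)).
have [a2 b2] := uniq u2 (conj (fun v => esym (h1.1 v)) (fun e => esym (h1.2 e))).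
by split=> x; [rewrite a1 a2 | rewrite b1 b2].
Qed.
End Gen.

Section Gen2.
Variable Sg : signature.
Local Notation hyp := (hyp Sg).

Section TestE.
Variable D : hyp.
Definition XE : hyp := @Hyp Sg (node D) (edge D * bool)%type
  (fun x => src x.1) (fun x => tgt x.1) (fun x => lab x.1) (fun x => labP x.1).
Definition XEhom (P : pred (edge D)) : hom D XE :=
  @Hom Sg D XE id (fun e => (e, P e)) (fun e => esym (map_id _))
    (fun e => esym (map_id _)) (fun e => erefl).
End TestE.

Section TestV.
Variable D : hyp.
Lemma XV_labP (e : edge D) : smem (lab e) (size (map (fun v => (v, true)) (src e)))
   (size (map (fun v => (v, true)) (tgt e))).
Proof. rewrite !size_map; exact: labP. Qed.
Definition XV : hyp := @Hyp Sg (node D * bool)%type (edge D)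
  (fun e => map (fun v => (v, true)) (src e)) (fun e => map (fun v => (v, true)) (tgt e))
  (@lab _ D) XV_labP.
Definition XV1 : hom D XV := @Hom Sg D XV (fun v => (v, true)) id
  (fun e => erefl) (fun e => erefl) (fun e => erefl).
Variable P : pred (node D).
Hypothesis HP : forall e v, (v \in src e) || (v \in tgt e) -> P v.
Lemma XV2_src (e : edge D) : src (id e : edge XV) = map (fun v => (v, P v)) (src e).
Proof. by apply/eq_in_map => v Hv /=; rewrite (HP (e:=e)) // Hv. Qed.
Lemma XV2_tgt (e : edge D) : tgt (id e : edge XV) = map (fun v => (v, P v)) (tgt e).
Proof. by apply/eq_in_map => v Hv /=; rewrite (HP (e:=e)) // Hv orbT. Qed.
Definition XV2 : hom D XV := @Hom Sg D XV (fun v => (v, P v)) id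
  XV2_src XV2_tgt (fun e => erefl).
End TestV.

Lemma jepi_surjE (B C D : hyp) (p : hom B D) (q : hom C D) : jepi p q ->
  forall e, (exists b, hE p b = e) \/ (exists c, hE q c = e).
Proof.
move=> J e.
pose P := fun e => [exists b, hE p b == e] || [exists c, hE q c == e].
have h1 : heq (hcomp p (XEhom (fun _ => true))) (hcomp p (XEhom P)).
  split=> x //=; congr pair; rewrite /P; apply/esym/orP; left; apply/existsP; by exists x.
have h2 : heq (hcomp q (XEhom (fun _ => true))) (hcomp q (XEhom P)).
  split=> x //=; congr pair; rewrite /P; apply/esym/orP; right; apply/existsP; by exists x.
have [_ /(_ e) /= [] H] := J _ _ _ h1 h2.
move: H; rewrite /P => /esym/orP[/existsP[b /eqP Hb]|/existsP[c /eqP Hc]]; by [left; exists b | right; exists c].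
Qed.

Lemma jepi_surjV (B C D : hyp) (p : hom B D) (q : hom C D) : jepi p q ->
  forall v, (exists b, hV p b = v) \/ (exists c, hV q c = v).
Proof.
move=> J v.
pose P := fun v => [exists b, hV p b == v] || [exists c, hV q c == v].
have HP : forall e v, (v \in src e) || (v \in tgt e) -> P v.
  move=> e w; case: (jepi_surjE J e) => [[b <-]|[c <-]].
    rewrite hsrc htgt => /orP[]/mapP[x _ ->]; apply/orP; left; apply/existsP; by exists x.
  rewrite hsrc htgt => /orP[]/mapP[x _ ->]; apply/orP; right; apply/existsP; by exists x.
have h1 : heq (hcomp p (XV1 D)) (hcomp p (XV2 HP)).
  split=> x //=; congr pair; rewrite /P; apply/esym/orP; left; apply/existsP; by exists x.
have h2 : heq (hcomp q (XV1 D)) (hcomp q (XV2 HP)).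
  split=> x //=; congr pair; rewrite /P; apply/esym/orP; right; apply/existsP; by exists x.
have [/(_ v) /= [] H _] := J _ _ _ h1 h2.
move: H; rewrite /P => /esym/orP[/existsP[b /eqP Hb]|/existsP[c /eqP Hc]]; by [left; exists b | right; exists c].
Qed.
End Gen2.

Section MonoPO.
Variable Sg : signature.
Local Notation hyp := (hyp Sg).
Variables (A B C : hyp) (f : hom A B) (g : hom A C).
Hypothesis fmono : mono f.

Definition mhV (b : node B) : (node C + node B)%type :=
  match [pick a | hV f a == b] with Some a => inl (hV g a) | None => inr b end.
Definition mhE (e : edge B) : (edge C + edge B)%type :=
  match [pick a | hE f a == e] with Some a => inl (hE g a) | None => inr e end.
Lemma mhV_f a : mhV (hV f a) = inl (hV g a).
Proof.
rewrite /mhV; case: pickP => [a' /eqP H | H]; first by rewrite (fmono.1 _ _ H).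
by have := H a; rewrite eqxx.
Qed.
Lemma mhE_f a : mhE (hE f a) = inl (hE g a).
Proof.
rewrite /mhE; case: pickP => [a' /eqP H | H]; first by rewrite (fmono.2 _ _ H).
by have := H a; rewrite eqxx.
Qed.
Definition mX_src (x : (edge C + edge B)%type) : seq (node C + node B)%type :=
  match x with inl e => map inl (src e) | inr e => map mhV (src e) end.
Definition mX_tgt (x : (edge C + edge B)%type) : seq (node C + node B)%type :=
  match x with inl e => map inl (tgt e) | inr e => map mhV (tgt e) end.
Definition mX_lab (x : (edge C + edge B)%type) : slabel Sg :=
  match x with inl e => lab e | inr e => lab e end.
Lemma mX_labP x : smem (mX_lab x) (size (mX_src x)) (size (mX_tgt x)).
Proof. case: x => e /=; rewrite !size_map; exact: labP. Qed.
Definition mX : hyp := @Hyp Sg (node C + node B)%type (edge C + edge B)%type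
  mX_src mX_tgt mX_lab mX_labP.
Lemma mh_src e : src (mhE e : edge mX) = map mhV (src e).
Proof.
rewrite /mhE; case: pickP => [a /eqP <- | _] //=.
rewrite !hsrc -!map_comp; apply: eq_map => v /=; by rewrite mhV_f.
Qed.
Lemma mh_tgt e : tgt (mhE e : edge mX) = map mhV (tgt e).
Proof.
rewrite /mhE; case: pickP => [a /eqP <- | _] //=.
rewrite !htgt -!map_comp; apply: eq_map => v /=; by rewrite mhV_f.
Qed.
Lemma mh_lab e : lab (mhE e : edge mX) = lab e.
Proof. by rewrite /mhE; case: pickP => [a /eqP <- | _] //=; rewrite !hlab. Qed.
Definition mh : hom B mX := @Hom Sg B mX mhV mhE mh_src mh_tgt mh_lab.
Definition mk : hom C mX := @Hom Sg C mX inl inl (fun _ => erefl) (fun _ => erefl) (fun _ => erefl).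

Lemma pushout_mono (D : hyp) (p : hom B D) (q : hom C D) :
  is_pushout f g p q -> mono q.
Proof.
case=> _ /(_ mX mh mk) [].
  by split=> x /=; rewrite ?mhV_f ?mhE_f.
move=> u [_ [[H1 H2] _]]; split=> x y E.
  by have := H1 x; have := H1 y; rewrite /= E => -> [].
by have := H2 x; have := H2 y; rewrite /= E => -> [].
Qed.
End MonoPO.

Section Recog.
Variable Sg : signature.
Local Notation hyp := (hyp Sg).
Variables (A B C D : hyp) (f : hom A B) (g : hom A C) (p : hom B D) (q : hom C D).
Hypothesis comm : heq (hcomp f p) (hcomp g q).
Hypothesis pm : mono p.
Hypothesis qm : mono q.
Hypothesis covV : forall v, (exists b, hV p b = v) \/ (exists c, hV q c = v).
Hypothesis covE : forall e, (exists b, hE p b = e) \/ (exists c, hE q c = e).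
Hypothesis intV : forall b c, hV p b = hV q c -> exists a, hV f a = b /\ hV g a = c.
Hypothesis intE : forall b c, hE p b = hE q c -> exists a, hE f a = b /\ hE g a = c.

Definition PV v (x : (node B + node C)%type) : bool :=
  match x with inl b => hV p b == v | inr c => hV q c == v end.
Definition PE e (x : (edge B + edge C)%type) : bool :=
  match x with inl b => hE p b == e | inr c => hE q c == e end.
Lemma exPV v : exists x, PV v x.
Proof. by case: (covV v) => [[b <-]|[c <-]]; [exists (inl b) | exists (inr c)] => /=. Qed.
Lemma exPE e : exists x, PE e x.
Proof. by case: (covE e) => [[b <-]|[c <-]]; [exists (inl b) | exists (inr c)] => /=. Qed.
Definition selV v := xchoose (exPV v).
Definition selE e := xchoose (exPE e).

Variables (X : hyp) (h : hom B X) (k : hom C X).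
Hypothesis hk : heq (hcomp f h) (hcomp g k).
Definition hkV (x : (node B + node C)%type) :=
  match x with inl b => hV h b | inr c => hV k c end.
Definition hkE (x : (edge B + edge C)%type) :=
  match x with inl b => hE h b | inr c => hE k c end.

Lemma hkV_wd v x y : PV v x -> PV v y -> hkV x = hkV y.
Proof.
have key : forall b c, hV p b = hV q c -> hV h b = hV k c.
  move=> b c /intV [a [<- <-]]; exact: (hk.1 a).
case: x => [b|c]; case: y => [b'|c'] /= /eqP E1 /eqP E2.
- by rewrite (pm.1 b b') // E1 E2.
- by apply: key; rewrite E1 E2.
- by apply/esym/key; rewrite E1 E2.
- by rewrite (qm.1 c c') // E1 E2.
Qed.
Lemma hkE_wd e x y : PE e x -> PE e y -> hkE x = hkE y.
Proof.
have key : forall b c, hE p b = hE q c -> hE h b = hE k c.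
  move=> b c /intE [a [<- <-]]; exact: (hk.2 a).
case: x => [b|c]; case: y => [b'|c'] /= /eqP E1 /eqP E2.
- by rewrite (pm.2 b b') // E1 E2.
- by apply: key; rewrite E1 E2.
- by apply/esym/key; rewrite E1 E2.
- by rewrite (qm.2 c c') // E1 E2.
Qed.
Definition ruV v := hkV (selV v).
Definition ruE e := hkE (selE e).
Lemma ruV_spec v x : PV v x -> ruV v = hkV x.
Proof. move=> H; apply: hkV_wd H; exact: xchooseP. Qed.
Lemma ruE_spec e x : PE e x -> ruE e = hkE x.
Proof. move=> H; apply: hkE_wd H; exact: xchooseP. Qed.
Lemma ruV_p b : ruV (hV p b) = hV h b.
Proof. by rewrite (@ruV_spec _ (inl b)) //= eqxx. Qed.
Lemma ruV_q c : ruV (hV q c) = hV k c.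
Proof. by rewrite (@ruV_spec _ (inr c)) //= eqxx. Qed.
Lemma ruE_p b : ruE (hE p b) = hE h b.
Proof. by rewrite (@ruE_spec _ (inl b)) //= eqxx. Qed.
Lemma ruE_q c : ruE (hE q c) = hE k c.
Proof. by rewrite (@ruE_spec _ (inr c)) //= eqxx. Qed.

Lemma ru_src e : src (ruE e) = map ruV (src e).
Proof.
case: (covE e) => [[b <-]|[c <-]].
  by rewrite ruE_p hsrc hsrc -map_comp; apply: eq_map => v /=; rewrite ruV_p.
by rewrite ruE_q hsrc hsrc -map_comp; apply: eq_map => v /=; rewrite ruV_q.
Qed.
Lemma ru_tgt e : tgt (ruE e) = map ruV (tgt e).
Proof.
case: (covE e) => [[b <-]|[c <-]].
  by rewrite ruE_p htgt htgt -map_comp; apply: eq_map => v /=; rewrite ruV_p.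
by rewrite ruE_q htgt htgt -map_comp; apply: eq_map => v /=; rewrite ruV_q.
Qed.
Lemma ru_lab e : lab (ruE e) = lab e.
Proof. by case: (covE e) => [[b <-]|[c <-]]; rewrite ?ruE_p ?ruE_q !hlab. Qed.
Definition ru : hom D X := @Hom Sg D X ruV ruE ru_src ru_tgt ru_lab.
End Recog.

Lemma recog_pushout (Sg : signature) (A B C D : hyp Sg) (f : hom A B) (g : hom A C)
  (p : hom B D) (q : hom C D) :
  heq (hcomp f p) (hcomp g q) -> mono p -> mono q ->
  (forall v, (exists b, hV p b = v) \/ (exists c, hV q c = v)) ->
  (forall e, (exists b, hE p b = e) \/ (exists c, hE q c = e)) ->
  (forall b c, hV p b = hV q c -> exists a, hV f a = b /\ hV g a = c) ->
  (forall b c, hE p b = hE q c -> exists a, hE f a = b /\ hE g a = c) ->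
  is_pushout f g p q.
Proof.
move=> comm pm qm covV covE intV intE; split=> // X h k hk.
exists (ru pm qm covV covE intV intE hk); split; [|split].
- by split=> x; [exact: (ruV_p pm qm covV intV hk x) | exact: (ruE_p pm qm covE intE hk x)].
- by split=> x; [exact: (ruV_q pm qm covV intV hk x) | exact: (ruE_q pm qm covE intE hk x)].
move=> u' [H1 H2] [H3 H4]; split=> x.
  case: (covV x) => [[b <-]|[c <-]]; [exact: (etrans (H1 b) (esym (ruV_p pm qm covV intV hk b))) | exact: (etrans (H3 c) (esym (ruV_q pm qm covV intV hk c)))].
case: (covE x) => [[b <-]|[c <-]]; [exact: (etrans (H2 b) (esym (ruE_p pm qm covE intE hk b))) | exact: (etrans (H4 c) (esym (ruE_q pm qm covE intE hk c)))].
Qed.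

Lemma conn_inv (T : finType) (e : rel T) (U : Type) (F : T -> U) :
  (forall x y, e x y -> F x = F y) -> forall x y, connect e x y -> F x = F y.
Proof.
move=> H x y /connectP [s Hp ->]; elim: s x Hp => //= z s IH x /andP [Hxz Hp].
rewrite (H _ _ Hxz); exact: IH.
Qed.

Section PO.
Variable Sg : signature.
Local Notation hyp := (hyp Sg).
Variables (A B C : hyp) (f : hom A B) (g : hom A C).
Local Notation BC := (coprod B C).

Definition relV : rel (node BC) := fun x y =>
  [exists a, ((x == inl (hV f a)) && (y == inr (hV g a))) ||
             ((y == inl (hV f a)) && (x == inr (hV g a)))].
Definition relE : rel (edge BC) := fun x y =>
  [exists a, ((x == inl (hE f a)) && (y == inr (hE g a))) ||
             ((y == inl (hE f a)) && (x == inr (hE g a)))].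
Lemma relV_sym : symmetric relV.
Proof. by move=> x y; apply/existsP/existsP => -[a H]; exists a; rewrite orbC. Qed.
Lemma relE_sym : symmetric relE.
Proof. by move=> x y; apply/existsP/existsP => -[a H]; exists a; rewrite orbC. Qed.
Let symV := sym_connect_sym relV_sym.
Let symE := sym_connect_sym relE_sym.

Definition DVt := {x : node BC | root relV x == x}.
Definition DEt := {x : edge BC | root relE x == x}.
Definition toV (x : node BC) : DVt := exist _ (root relV x) (introT eqP (root_root symV x)).
Definition toE (x : edge BC) : DEt := exist _ (root relE x) (introT eqP (root_root symE x)).

Lemma toV_eq x y : connect relV x y -> toV x = toV y.
Proof. by move=> H; apply: val_inj => /=; apply/rootP. Qed.

Lemma relE_src x y : relE x y -> map toV (src x) = map toV (src y).
Proof.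
have key : forall a, map toV (src (inl (hE f a) : edge BC)) = map toV (src (inr (hE g a) : edge BC)).
  move=> a /=; rewrite !hsrc -!map_comp; apply: eq_map => v /=; apply: toV_eq.
  apply: connect1; apply/existsP; exists v; by rewrite !eqxx.
move=> /existsP [a /orP [/andP [/eqP -> /eqP ->]|/andP [/eqP -> /eqP ->]]] //; by rewrite key.
Qed.
Lemma relE_tgt x y : relE x y -> map toV (tgt x) = map toV (tgt y).
Proof.
have key : forall a, map toV (tgt (inl (hE f a) : edge BC)) = map toV (tgt (inr (hE g a) : edge BC)).
  move=> a /=; rewrite !htgt -!map_comp; apply: eq_map => v /=; apply: toV_eq.
  apply: connect1; apply/existsP; exists v; by rewrite !eqxx.
move=> /existsP [a /orP [/andP [/eqP -> /eqP ->]|/andP [/eqP -> /eqP ->]]] //; by rewrite key.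
Qed.
Lemma relE_lab x y : relE x y -> lab x = lab y.
Proof.
move=> /existsP [a /orP [/andP [/eqP -> /eqP ->]|/andP [/eqP -> /eqP ->]]] /=;
  by rewrite !hlab.
Qed.

Definition D_src (y : DEt) : seq DVt := map toV (src (val y)).
Definition D_tgt (y : DEt) : seq DVt := map toV (tgt (val y)).
Definition D_lab (y : DEt) : slabel Sg := lab (val y).
Lemma D_labP y : smem (D_lab y) (size (D_src y)) (size (D_tgt y)).
Proof. rewrite /D_src /D_tgt !size_map; exact: labP. Qed.
Definition POD : hyp := @Hyp Sg DVt DEt D_src D_tgt D_lab D_labP.

Lemma toE_src x : src (toE x : edge POD) = map toV (src x).
Proof. exact/esym/(conn_inv relE_src)/connect_root. Qed.
Lemma toE_tgt x : tgt (toE x : edge POD) = map toV (tgt x).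
Proof. exact/esym/(conn_inv relE_tgt)/connect_root. Qed.
Lemma toE_lab x : lab (toE x : edge POD) = lab x.
Proof. exact/esym/(conn_inv relE_lab)/connect_root. Qed.

Lemma pp_src e : src (toE (inl e) : edge POD) = map (fun b => toV (inl b)) (src e).
Proof. by rewrite toE_src /= -map_comp. Qed.
Lemma pp_tgt e : tgt (toE (inl e) : edge POD) = map (fun b => toV (inl b)) (tgt e).
Proof. by rewrite toE_tgt /= -map_comp. Qed.
Lemma pp_lab e : lab (toE (inl e) : edge POD) = lab e.
Proof. by rewrite toE_lab. Qed.
Definition POp : hom B POD := @Hom Sg B POD (fun b => toV (inl b)) (fun e => toE (inl e)) pp_src pp_tgt pp_lab.
Lemma pq_src e : src (toE (inr e) : edge POD) = map (fun b => toV (inr b)) (src e).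
Proof. by rewrite toE_src /= -map_comp. Qed.
Lemma pq_tgt e : tgt (toE (inr e) : edge POD) = map (fun b => toV (inr b)) (tgt e).
Proof. by rewrite toE_tgt /= -map_comp. Qed.
Lemma pq_lab e : lab (toE (inr e) : edge POD) = lab e.
Proof. by rewrite toE_lab. Qed.
Definition POq : hom C POD := @Hom Sg C POD (fun b => toV (inr b)) (fun e => toE (inr e)) pq_src pq_tgt pq_lab.

Section Univ.
Variables (X : hyp) (h : hom B X) (k : hom C X).
Hypothesis hk : heq (hcomp f h) (hcomp g k).
Local Notation cp := (copair h k).
Lemma cp_relV x y : relV x y -> hV cp x = hV cp y.
Proof.
move=> /existsP [a /orP [/andP [/eqP -> /eqP ->]|/andP [/eqP -> /eqP ->]]] /=;
  by move: (hk.1 a) => /= ->.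
Qed.
Lemma cp_relE x y : relE x y -> hE cp x = hE cp y.
Proof.
move=> /existsP [a /orP [/andP [/eqP -> /eqP ->]|/andP [/eqP -> /eqP ->]]] /=;
  by move: (hk.2 a) => /= ->.
Qed.
Lemma cp_root x : hV cp (root relV x) = hV cp x.
Proof. exact/esym/(conn_inv cp_relV)/connect_root. Qed.
Lemma cp_rootE x : hE cp (root relE x) = hE cp x.
Proof. exact/esym/(conn_inv cp_relE)/connect_root. Qed.
Definition pu_V (t : DVt) := hV cp (val t).
Definition pu_E (t : DEt) := hE cp (val t).
Lemma pu_src (t : edge POD) : src (pu_E t) = map pu_V (src t).
Proof.
rewrite /pu_E hsrc /= /D_src -map_comp; apply: eq_map => x /=; rewrite /pu_V; exact/esym/cp_root.
Qed.
Lemma pu_tgt (t : edge POD) : tgt (pu_E t) = map pu_V (tgt t).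
Proof.
rewrite /pu_E htgt /= /D_tgt -map_comp; apply: eq_map => x /=; rewrite /pu_V; exact/esym/cp_root.
Qed.
Lemma pu_lab (t : edge POD) : lab (pu_E t) = lab t.
Proof. by rewrite /pu_E hlab. Qed.
Definition pu : hom POD X := @Hom Sg POD X pu_V pu_E pu_src pu_tgt pu_lab.
End Univ.

Lemma POD_pushout : is_pushout f g POp POq.
Proof.
split.
  split=> a /=.
    apply: toV_eq; apply: connect1; apply/existsP; exists a; by rewrite !eqxx.
  apply: val_inj => /=; apply/rootP => //; apply: connect1; apply/existsP; exists a; by rewrite !eqxx.
move=> X h k hk; exists (pu hk); split; [|split].
- by split=> x; [exact: (cp_root hk (inl x)) | exact: (cp_rootE hk (inl x))].
- by split=> x; [exact: (cp_root hk (inr x)) | exact: (cp_rootE hk (inr x))].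
move=> u' [H1 H2] [H3 H4]; split.
  case=> x Hx; have -> : exist _ x Hx = toV x by apply: val_inj; rewrite /= (eqP Hx).
  rewrite [RHS](cp_root hk); case: x {Hx} => [b|c] /=; [exact: H1 | exact: H3].
case=> x Hx; have -> : exist _ x Hx = toE x by apply: val_inj; rewrite /= (eqP Hx).
rewrite [RHS](cp_rootE hk); case: x {Hx} => [b|c] /=; [exact: H2 | exact: H4].
Qed.
End PO.

Section Deg.
Variable Sg : signature.
Local Notation hyp := (hyp Sg).
Lemma two_src (G : hyp) (v : node G) e1 e2 : e1 != e2 -> v \in src e1 -> v \in src e2 ->
  1 < outdeg v.
Proof.
move=> ne h1 h2; rewrite /outdeg (bigD1 e1) // (bigD1 e2) /=; last by rewrite eq_sym.
have c1 : 0 < count (pred1 v) (src e1) by rewrite -has_count has_pred1.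
have c2 : 0 < count (pred1 v) (src e2) by rewrite -has_count has_pred1.
rewrite addnA; apply: leq_trans (leq_addr _ _); exact: (leq_add c1 c2).
Qed.
Lemma two_tgt (G : hyp) (v : node G) e1 e2 : e1 != e2 -> v \in tgt e1 -> v \in tgt e2 ->
  1 < indeg v.
Proof.
move=> ne h1 h2; rewrite /indeg (bigD1 e1) // (bigD1 e2) /=; last by rewrite eq_sym.
have c1 : 0 < count (pred1 v) (tgt e1) by rewrite -has_count has_pred1.
have c2 : 0 < count (pred1 v) (tgt e2) by rewrite -has_count has_pred1.
rewrite addnA; apply: leq_trans (leq_addr _ _); exact: (leq_add c1 c2).
Qed.
Lemma outdeg_ex (G : hyp) (v : node G) : v \notin outset G -> exists e, v \in src e.
Proof.
rewrite inE => H; case: (pickP (fun e => 0 < count (pred1 v) (src e))) => [e He|H0].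
  by exists e; rewrite -has_pred1 has_count.
move: H; rewrite /outdeg big1 // => e _; move: (H0 e) => /= /negbT; by rewrite -leqNgt leqn0 => /eqP.
Qed.
Lemma indeg_ex (G : hyp) (v : node G) : v \notin inset G -> exists e, v \in tgt e.
Proof.
rewrite inE => H; case: (pickP (fun e => 0 < count (pred1 v) (tgt e))) => [e He|H0].
  by exists e; rewrite -has_pred1 has_count.
move: H; rewrite /indeg big1 // => e _; move: (H0 e) => /= /negbT; by rewrite -leqNgt leqn0 => /eqP.
Qed.
Lemma no_edge (G : hyp) : discrete G -> edge G -> False.
Proof. by move=> H x; have := card0_eq H x; rewrite !inE. Qed.
End Deg.

Section Constr.
Variable Sg : signature.
Local Notation hyp := (hyp Sg).
Variable r : rule Sg.
Hypothesis Hr : left_connected_rule r.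
Variable S : hyp.
Hypothesis HS : is_ma S.
Variable m : hom (rL r) S.
Hypothesis mm : mono m.
Local Notation L := (rL r).
Local Notation K := (coprod (rI r) (rO r)).
Local Notation l := (copair (riL r) (roL r)).

Definition inIm (v : node S) := [exists a, hV m a == v].
Definition inIf (v : node S) := [exists i : node K, hV m (hV l i) == v].
Definition cnode (v : node S) := ~~ inIm v || inIf v.
Definition cedge (e : edge S) := ~~ [exists a, hE m a == e].

Lemma inset_L a : a \in inset L -> exists i, hV l i = a.
Proof.
case: Hr => [[_ _ [_ [H _]] _ _] _] /H [x <-]; by exists (inl x).
Qed.
Lemma outset_L a : a \in outset L -> exists i, hV l i = a.
Proof.
case: Hr => [[_ _ [_ [_ H]] _ _] _] /H [x <-]; by exists (inr x).
Qed.

Lemma cnode_m a : cnode (hV m a) -> exists i, hV l i = a.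
Proof.
rewrite /cnode /inIm => /orP [/existsPn /(_ a)|/existsP [i /eqP /(mm.1) <-]].
  by rewrite eqxx.
by exists i.
Qed.

Lemma dangling e v : cedge e -> (v \in src e) || (v \in tgt e) -> cnode v.
Proof.
move=> ce Hv; rewrite /cnode; case Him: (inIm v) => //=.
move: Him => /existsP [a /eqP Ha]; apply/existsP.
case: (boolP [exists i, hV l i == a]) => [/existsP [i /eqP Hi]|/existsPn Hn].
  by exists i; rewrite Hi Ha.
exfalso; case/orP: Hv => Hv.
- have : a \notin outset L.
    by apply/negP => /outset_L [i Hi]; move: (Hn i); rewrite Hi eqxx.
  move=> /outdeg_ex [e0 He0].
  have ne : hE m e0 != e.
    by apply/negP => /eqP E; move: ce; rewrite /cedge; apply/negP/negPn/existsP; exists e0; rewrite E.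
  have H2 : v \in src (hE m e0) by rewrite hsrc -Ha map_f.
  have := two_src ne H2 Hv.
  by case: HS => _ /(_ v) [_ H1]; rewrite ltnNge H1.
- have : a \notin inset L.
    by apply/negP => /inset_L [i Hi]; move: (Hn i); rewrite Hi eqxx.
  move=> /indeg_ex [e0 He0].
  have ne : hE m e0 != e.
    by apply/negP => /eqP E; move: ce; rewrite /cedge; apply/negP/negPn/existsP; exists e0; rewrite E.
  have H2 : v \in tgt (hE m e0) by rewrite htgt -Ha map_f.
  have := two_tgt ne H2 Hv.
  by case: HS => _ /(_ v) [H1 _]; rewrite ltnNge H1.
Qed.

Definition CV := {v : node S | cnode v}.
Definition CE := {e : edge S | cedge e}.
Definition C_src (e : CE) : seq CV := pmap insub (src (val e)).
Definition C_tgt (e : CE) : seq CV := pmap insub (tgt (val e)).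
Definition C_lab (e : CE) : slabel Sg := lab (val e).

Lemma map_val_pmap (s : seq (node S)) : map val (pmap (insub : _ -> option CV) s) = filter cnode s.
Proof.
elim: s => //= a s IH; case: insubP => [u Pu Eu|Pa] /=.
  by rewrite Pu -Eu IH.
by rewrite (negbTE Pa).
Qed.
Lemma C_src_val e : map val (C_src e) = src (val e).
Proof.
rewrite map_val_pmap; apply/all_filterP/allP => v Hv.
by apply: (dangling (valP e)); rewrite Hv.
Qed.
Lemma C_tgt_val e : map val (C_tgt e) = tgt (val e).
Proof.
rewrite map_val_pmap; apply/all_filterP/allP => v Hv.
by apply: (dangling (valP e)); rewrite Hv orbT.
Qed.
Lemma C_labP e : smem (C_lab e) (size (C_src e)) (size (C_tgt e)).
Proof.
rewrite -(size_map val (C_src e)) -(size_map val (C_tgt e)) C_src_val C_tgt_val; exact: labP.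
Qed.
Definition Cg : hyp := @Hyp Sg CV CE C_src C_tgt C_lab C_labP.
Definition Cc : hom Cg S := @Hom Sg Cg S val val (fun e => esym (C_src_val e))
  (fun e => esym (C_tgt_val e)) (fun e => erefl).

Lemma dI : discrete (rI r). Proof. by case: Hr => [[]]. Qed.
Lemma dO : discrete (rO r). Proof. by case: Hr => [[]]. Qed.
Definition noK (e : edge K) : False :=
  match e with inl e => no_edge dI e | inr e => no_edge dO e end.
Lemma cnode_k i : cnode (hV m (hV l i)).
Proof. by rewrite /cnode; apply/orP; right; apply/existsP; exists i. Qed.
Definition Ck : hom K Cg := @Hom Sg K Cg (fun i => exist _ (hV m (hV l i)) (cnode_k i))
  (fun e => match noK e with end) (fun e => match noK e with end)
  (fun e => match noK e with end) (fun e => match noK e with end).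

Lemma Cpo1 : is_pushout l Ck m Cc.
Proof.
have lm : mono l by case: Hr => [[]].
apply: recog_pushout => //.
- split=> x; [by [] | case: (noK x)].
- by split; apply: val_inj.
- move=> v; case Him: (inIm v).
    by move: Him => /existsP [a /eqP <-]; left; exists a.
  right; have Hc : cnode v by rewrite /cnode Him.
  by exists (exist _ v Hc).
- move=> e; case: (boolP [exists a, hE m a == e]) => [/existsP [a /eqP <-] | H].
    by left; exists a.
  by right; exists (exist _ e H).
- move=> b c E; have Hc : cnode (hV Cc c) := valP c; move: Hc; rewrite -E => /cnode_m [i Hi].
  by exists i; split => //; apply: val_inj; change (hV m (hV l i) = hV Cc c); rewrite Hi.
- move=> b c E; have Hc : cedge (hE Cc c) := valP c; move: Hc; rewrite /cedge -E => /existsPn /(_ b).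
  by rewrite eqxx.
Qed.

Lemma inset_cnode v : v \in inset S -> cnode v.
Proof.
move=> Hv; rewrite /cnode; case Him: (inIm v) => //=.
move: Him => /existsP [a /eqP Ha].
have : a \in inset L.
  move: Hv; rewrite !inE -Ha => /eqP H0.
  by have := indeg_le mm.2 a; rewrite H0 leqn0.
by move=> /inset_L [i Hi]; apply/existsP; exists i; rewrite Hi Ha.
Qed.
Lemma outset_cnode v : v \in outset S -> cnode v.
Proof.
move=> Hv; rewrite /cnode; case Him: (inIm v) => //=.
move: Him => /existsP [a /eqP Ha].
have : a \in outset L.
  move: Hv; rewrite !inE -Ha => /eqP H0.
  by have := outdeg_le mm.2 a; rewrite H0 leqn0.
by move=> /outset_L [i Hi]; apply/existsP; exists i; rewrite Hi Ha.
Qed.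

Definition Cn : hom (disc Sg {v : node S | v \in inset S}) Cg :=
  disc_hom (fun v => exist _ (val v) (inset_cnode (valP v)) : node Cg).
Definition Cm : hom (disc Sg {v : node S | v \in outset S}) Cg :=
  disc_hom (fun v => exist _ (val v) (outset_cnode (valP v)) : node Cg).
Lemma Cn_ok : heq (hcomp Cn Cc) (in_incl S).
Proof. by split=> x //; case: x. Qed.
Lemma Cm_ok : heq (hcomp Cm Cc) (out_incl S).
Proof. by split=> x //; case: x. Qed.

Definition Cder (mc : convex_match m) : derivation (in_incl S) (out_incl S) m :=
  {| dC := Cg; dk := Ck; dc := Cc;
     dT := POD (copair (riR r) (roR r)) Ck;
     dr := POp (copair (riR r) (roR r)) Ck;
     dd := POq (copair (riR r) (roR r)) Ck;
     dn := Cn; dm := Cm;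
     d_convex := mc; d_po1 := Cpo1; d_po2 := POD_pushout _ _;
     d_n := Cn_ok; d_m := Cm_ok |}.

Lemma factor_info (L' : hyp) (u : hom L' Cg) (m' : hom L' S) :
  heq (hcomp u Cc) m' -> (forall a, cnode (hV m' a)) /\ (forall e, cedge (hE m' e)).
Proof.
case=> H1 H2; split=> x; [rewrite -H1 | rewrite -H2]; exact: valP.
Qed.
End Constr.

Section Coeq.
Variable Sg : signature.
Local Notation hyp := (hyp Sg).
Variables (S S' : hyp) (N : {set node S * node S}) (eps' : hom S S').
Hypothesis Hc : is_coeq (gq1 N) (gq2 N) eps'.

Definition XA : hyp := @Hyp Sg (node S') (edge S) (fun e => map (hV eps') (src e))
  (fun e => map (hV eps') (tgt e)) (@lab _ S)
  (fun e => eq_ind_r (fun n => smem _ n _) (eq_ind_r (fun n => smem _ _ n) (labP e) (size_map _ _)) (size_map _ _)).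
Definition hA : hom S XA := @Hom Sg S XA (hV eps') id (fun e => erefl) (fun e => erefl) (fun e => erefl).

Lemma coeq_einj : injective (hE eps').
Proof.
case: Hc => [[cV _] univ].
have [|u [[_ H2] _]] := univ XA hA.
  by split=> x; [exact: (cV x) | case: x].
by move=> x y E; have := H2 x; have := H2 y; rewrite /= E => -> .
Qed.

Hypothesis disj : forall p q, p \in N -> q \in N -> p <> q ->
     [/\ p.1 <> q.1, p.1 <> q.2, p.2 <> q.1 & p.2 <> q.2].

Definition rN (v : node S) : node S :=
  if [pick p in N | p.2 == v] is Some p then p.1 else v.

Lemma rN_spec v : (rN v = v /\ forall q, q \in N -> q.2 <> v) \/
   (exists q, [/\ q \in N, q.2 = v & rN v = q.1]).
Proof.
rewrite /rN; case: pickP => [q /andP [Hq /eqP E]|H].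
  by right; exists q.
left; split=> // q Hq E; by have := H q; rewrite Hq E eqxx.
Qed.

Lemma rN_p p : p \in N -> rN p.1 = rN p.2.
Proof.
move=> Hp.
have E2 : rN p.2 = p.1.
  case: (rN_spec p.2) => [[_ /(_ p Hp)] //|[q [Hq Eq ->]]].
  case: (q =P p) => [-> //|ne]; by case: (disj Hq Hp ne) => _ _ _ /(_ Eq).
rewrite E2; case: (rN_spec p.1) => [[-> //]|[q [Hq Eq ->]]].
case: (q =P p) => [-> //|ne]; by case: (disj Hp Hq (fun e => ne (esym e))) => _ /(_ (esym Eq)).
Qed.

Definition XR : hyp := @Hyp Sg (node S) (edge S) (fun e => map rN (src e))
  (fun e => map rN (tgt e)) (@lab _ S)
  (fun e => eq_ind_r (fun n => smem _ n _) (eq_ind_r (fun n => smem _ _ n) (labP e) (size_map _ _)) (size_map _ _)).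
Definition hR : hom S XR := @Hom Sg S XR rN id (fun e => erefl) (fun e => erefl) (fun e => erefl).

Lemma coeq_node a b : hV eps' a = hV eps' b -> a = b \/ (a, b) \in N \/ (b, a) \in N.
Proof.
case: Hc => [_ univ].
have [|u [[H1 _] _]] := univ XR hR.
  split=> x; last by case: x.
  by case: x => p Hp; exact: rN_p.
move=> E; have : rN a = rN b by have := H1 a; have := H1 b; rewrite /= E => -> .
case: (rN_spec a) => [[-> Ha]|[qa [Hqa Ea ->]]];
case: (rN_spec b) => [[-> Hb]|[qb [Hqb Eb ->]]].
- by left.
- by move=> E1; right; left; rewrite E1 -Eb -surjective_pairing.
- by move=> E1; right; right; rewrite -E1 -Ea -surjective_pairing.
- move=> E1; case: (qa =P qb) => [Eq|ne]; last by case: (disj Hqa Hqb ne).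
  by left; rewrite -Ea -Eb Eq.
Qed.
End Coeq.

Section Fin.
Variable Sg : signature.
Local Notation hyp := (hyp Sg).

Lemma ma_transfer (S S' : hyp) (f : hom S S') : injective (hE f) -> is_ma S' -> is_ma S.
Proof.
move=> fi [ac dg]; split.
  move=> p v; apply/negP => /(hpath_map f); apply/negP; exact: ac.
move=> v; have [a b] := dg (hV f v); split.
  exact: leq_trans (indeg_le fi v) a.
exact: leq_trans (outdeg_le fi v) b.
Qed.

Lemma ma_incl (G : hyp) : is_ma G -> ma_cospan (in_incl G) (out_incl G).
Proof.
move=> HG; split; [split|split].
- exact: card_void.
- exact: card_void.
- exact: HG.
- by split; [move=> x y; exact: val_inj | case].
- by split; [move=> x y; exact: val_inj | case].
- by move=> v; split => [H|[x <-]]; [exists (exist _ v H) | exact: valP].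
- by move=> v; split => [H|[x <-]]; [exists (exist _ v H) | exact: valP].
Qed.

Lemma conv_transfer (L G H : hyp) (m : hom L G) (f : hom G H) :
  injective (hE f) -> mono m -> convex_match (hcomp m f) -> convex_match m.
Proof.
move=> fi mm [_ cm]; split=> // x y p Hp e He.
have [e0 E] := cm x y (map (hE f) p) (hpath_map f Hp) (hE f e) (map_f _ He).
by exists e0; apply: fi.
Qed.

Lemma factor_mono (L C D : hyp) (q : hom C D) (m : hom L D) : mono q ->
  (forall a, exists c, hV q c = hV m a) -> (forall e, exists c, hE q c = hE m e) ->
  exists u : hom L C, heq (hcomp u q) m.
Proof.
move=> [qV qE] HV HE.
have HV' : forall a, exists c, hV q c == hV m a by move=> a; have [c Hc] := HV a; exists c; rewrite Hc.
have HE' : forall e, exists c, hE q c == hE m e by move=> e; have [c Hc] := HE e; exists c; rewrite Hc.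
pose uV a := xchoose (HV' a); pose uE e := xchoose (HE' e).
have uVP : forall a, hV q (uV a) = hV m a by move=> a; apply/eqP; exact: (xchooseP (HV' a)).
have uEP : forall e, hE q (uE e) = hE m e by move=> e; apply/eqP; exact: (xchooseP (HE' e)).
have us : forall e, src (uE e) = map uV (src e).
  move=> e; apply: (inj_map qV); rewrite -hsrc uEP hsrc -map_comp.
  by apply: eq_map => a /=; rewrite uVP.
have ut : forall e, tgt (uE e) = map uV (tgt e).
  move=> e; apply: (inj_map qV); rewrite -htgt uEP htgt -map_comp.
  by apply: eq_map => a /=; rewrite uVP.
have ul : forall e, lab (uE e) = lab e.
  by move=> e; rewrite -(hlab q) uEP hlab.
by exists (@Hom Sg L C uV uE us ut ul); split=> x /=.
Qed.

Lemma transfer (r : rule Sg) (Hr : left_connected_rule r) (S S' : hyp) (eps' : hom S S')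
  (Einj : injective (hE eps'))
  (Vcl : forall a b, hV eps' a = hV eps' b -> a = b \/
      ((a \in inset S) || (a \in outset S)) && ((b \in inset S) || (b \in outset S)))
  (maS : is_ma S) (mo : hom (rL r) S) (mom : mono mo)
  (L' : hyp) (mt : hom L' S) (n0 m0 : hyp) (iS : hom n0 S') (oS : hom m0 S')
  (D' : derivation iS oS (hcomp mo eps'))
  (u : hom L' (Cg Hr maS mo)) (Hu : heq (hcomp u (Cc Hr maS mo)) mt) :
  exists u' : hom L' (dC D'), heq (hcomp u' (dc D')) (hcomp mt eps').
Proof.
have [cn ce] := factor_info Hu.
have lm : mono (copair (riL r) (roL r)) by case: (Hr) => [[]].
have qm := pushout_mono lm (d_po1 D').
have J := pushout_jepi (d_po1 D').
have [[c1 _] _] := d_po1 D'.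
apply: factor_mono qm _ _.
- move=> a; case: (jepi_surjV J (hV (hcomp mt eps') a)) => [[b Eb]|[c Ec]]; last by exists c.
  have [i Hi] : exists i, hV (copair (riL r) (roL r)) i = b.
    case: (Vcl _ _ (esym Eb)) => [E | /andP [_ /orP [H|H]]].
    + apply: (cnode_m mom); rewrite -E; exact: cn a.
    + apply: (inset_L Hr); move: H; rewrite !inE => /eqP H0.
      by have := indeg_le mom.2 b; rewrite H0 leqn0.
    + apply: (outset_L Hr); move: H; rewrite !inE => /eqP H0.
      by have := outdeg_le mom.2 b; rewrite H0 leqn0.
  exists (hV (dk D') i); have := c1 i; rewrite /= => <-.
  by move: Hi Eb => /= -> .
- move=> e; case: (jepi_surjE J (hE (hcomp mt eps') e)) => [[b Eb]|[c Ec]]; last by exists c.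
  exfalso; move: (ce e); rewrite /cedge => /existsPn /(_ b).
  by rewrite (Einj _ _ Eb) eqxx.
Qed.
End Fin.
Unset Implicit Arguments.

Theorem mainTheorem8 (Sg : signature) (rs : seq (rule Sg)) (ri rj : rule Sg) :
  left_connected_system rs ->
  Stdlib.Lists.List.In ri rs -> Stdlib.Lists.List.In rj rs ->
  forall (M : {set edge (rL ri) * edge (rL rj)}) (HM : valid_edge_gluing M)
         (S : hyp Sg) (eps : hom (coprod (rL ri) (rL rj)) S),
    is_coeq (hcomp (gp1 HM) (inj1 (rL ri) (rL rj)))
            (hcomp (gp2 HM) (inj2 (rL ri) (rL rj))) eps ->
  forall (N : {set node S * node S}),
    valid_node_gluing eps N ->
  forall (S' : hyp Sg) (eps' : hom S S'),
    is_coeq (gq1 N) (gq2 N) eps' ->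
    yields_cp (hcomp (hcomp (inj1 (rL ri) (rL rj)) eps) eps')
                 (hcomp (hcomp (inj2 (rL ri) (rL rj)) eps) eps') ->
    yields_cp (hcomp (inj1 (rL ri) (rL rj)) eps)
                (hcomp (inj2 (rL ri) (rL rj)) eps).
Proof.
move=> Hsys Hi Hj M HM S eps Heps N HN S' eps' Heps' [mono1' mono2' macS' crit'].
have Hri := Hsys _ Hi; have Hrj := Hsys _ Hj.
have Einj := coeq_einj Heps'.
have HNio : forall p, p \in N -> (p.1 \in inset S) /\ (p.2 \in outset S).
  move=> [p1 p2] Hp; case: HN => [[/subsetP H | /subsetP H] _]; move: (H _ Hp);
  rewrite in_setX => /andP [H1 H2]; move: H1 H2;
  rewrite /glI1 /glO2 /glI2 /glO1 !in_setI => /andP [-> _] /andP [-> _] //.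
have Vcl : forall a b, hV eps' a = hV eps' b -> a = b \/
      ((a \in inset S) || (a \in outset S)) && ((b \in inset S) || (b \in outset S)).
  move=> a b /(coeq_node Heps' HN.2) [-> | [H|H]]; [by left | right ..].
    by have [/= -> ->] := HNio _ H; rewrite orbT.
  by have [/= -> ->] := HNio _ H; rewrite orbT.
have maS' : is_ma S' by case: macS' => [[_ _ H _ _] _].
have maS := ma_transfer Einj maS'.
have m1m := mono_comp_l mono1'; have m2m := mono_comp_l mono2'.
split => //; first exact: ma_incl maS.
case: crit' => [_ [_ [D1' [D2' np]]]].
split; first exact: ma_incl maS.
split.
  split.
    move=> v; case: (jepi_surjV (coeq_jepi Heps) v) => [[b <-]|[b <-]]; exists b; by case: b.
  move=> v; case: (jepi_surjE (coeq_jepi Heps) v) => [[b <-]|[b <-]]; exists b; by case: b.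
exists (Cder Hri maS m1m (conv_transfer Einj m1m (d_convex D1'))).
exists (Cder Hrj maS m2m (conv_transfer Einj m2m (d_convex D2'))).
move=> [[u1 Hu1] [u2 Hu2]]; apply: np; split.
  exact: (transfer Einj Vcl m2m D2' Hu1).
exact: (transfer Einj Vcl m1m D1' Hu2).
Qed.
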